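(* Let $G=(V,E)$ be an undirected graph with positive edge weights, and let $p,v\in V$ be distinct. If a minimum $p,v$-cut $S$ with $v\in S$ (and $p\notin S$) satisfies $|E(\{v\},V\setminus S)|>0.6\deg(v)$, then for all $v'\in S\setminus\{v\}$ we have $\lambda_{p,v'}\le 0.8\,\lambda_{p,v}$.
   Context: $|E(A,B)|$ is the total weight of edges between node sets $A$ and $B$; $\deg(u)$ is the total weight of edges incident to $u$; $\lambda_{x,y}$ denotes the value (total weight of crossing edges) of a minimum $x,y$-cut in $G$. *)

(* Defs.v *)
From HB Require Import structures.
From mathcomp Require Import all_boot all_order all_algebra.
Set Implicit Arguments. Unset Strict Implicit. Unset Printing Implicit Defensive.
Import Order.TTheory GRing.Theory Num.Theory.
Local Open Scope ring_scope.

(* A weighted undirected graph on a finite vertex set V is given by a weight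
   function w : V -> V -> R; the edge {x,y} is present iff w x y > 0
   (its weight is then w x y). *)
Definition wgraph (R : numDomainType) (V : finType) (w : V -> V -> R) : Prop :=
  (forall x y, w x y = w y x) /\ (forall x, w x x = 0) /\ (forall x y, 0 <= w x y).

Definition Ew (R : numDomainType) (V : finType) (w : V -> V -> R)
  (A B : {set V}) : R := \sum_(x in A) \sum_(y in B) w x y.

Definition degw (R : numDomainType) (V : finType) (w : V -> V -> R) (u : V) : R :=
  \sum_(y : V) w u y.

Definition cutval (R : numDomainType) (V : finType) (w : V -> V -> R)
  (S : {set V}) : R := Ew w S (~: S).

Definition is_cut (V : finType) (x y : V) (S : {set V}) : bool :=
  (y \in S) && (x \notin S).

Definition is_min_cut (R : realDomainType) (V : finType) (w : V -> V -> R)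
  (x y : V) (S : {set V}) : Prop :=
  is_cut x y S /\ forall T : {set V}, is_cut x y T -> cutval w S <= cutval w T.

(* lambda_{x,y}: value of a minimum x,y-cut (meaningful for x != y, where
   [set y] is itself an x,y-cut, so the default is never below the minimum) *)
Definition lambda (R : realDomainType) (V : finType) (w : V -> V -> R)
  (x y : V) : R :=
  \big[Num.min/cutval w [set y]]_(S : {set V} | is_cut x y S) cutval w S.

(* Main.v *)
Require Import Defs.
From HB Require Import structures.
From mathcomp Require Import all_boot all_order all_algebra.
From mathcomp Require Import lra.
Import Order.TTheory GRing.Theory Num.Theory.
Local Open Scope ring_scope.

Theorem lemma4p4 (R : realFieldType) (V : finType) (w : V -> V -> R)
  (p v : V) (S : {set V}) :
  wgraph w -> p != v ->
  is_min_cut w p v S ->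
  Ew w [set v] (~: S) > (3 / 5) * degw w v ->
  forall v' : V, v' \in S :\ v -> lambda w p v' <= (4 / 5) * lambda w p v.
Proof.
move=> [wsym [w0 wge0]] pv [/andP [vS pS] Smin] Hbig v' v'S.
set T := S :\ v.
have compT : forall F : V -> R,
    \sum_(y in ~: T) F y = F v + \sum_(y in ~: S) F y.
  move=> F; rewrite (bigD1 v) /=; last by rewrite !inE eqxx.
  congr (_ + _); apply: eq_bigl => y; rewrite !inE.
  by case: (y =P v) => [->|_] //=; rewrite ?andbT ?vS.
have splitS : forall F : V -> R,
    \sum_(x in S) F x = F v + \sum_(x in T) F x.
  move=> F; rewrite (bigD1 v) //=; congr (_ + _); apply: eq_bigl => y.
  by rewrite !inE andbC.
have all2 : forall F : V -> R,
    \sum_(y : V) F y = \sum_(y in S) F y + \sum_(y in ~: S) F y.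
  move=> F; rewrite (bigID (mem S)) /=; congr (_ + _); apply: eq_bigl => y.
  by rewrite !inE.
set a := Ew w [set v] (~: S).
have aE : a = \sum_(y in ~: S) w v y by rewrite /a /Ew big_set1.
set d := degw w v.
have cS : cutval w S = \sum_(x in T) \sum_(y in ~: S) w x y + a.
  by rewrite /cutval /Ew splitS addrC aE.
have cT : cutval w T = \sum_(x in T) \sum_(y in ~: S) w x y + (d - a).
  rewrite /cutval /Ew.
  under eq_bigr => x _ do rewrite compT.
  rewrite big_split /= addrC; congr (_ + _).
  rewrite /d /degw all2 splitS /=. have -> : w v v = 0 :> R by apply: w0. rewrite add0r -aE addrK.
  by apply: eq_bigr => x _; rewrite wsym.
have cv : cutval w [set v] = d.
  rewrite /cutval /Ew big_set1 /d /degw [RHS](bigD1 v) //= . have -> : w v v = 0 :> R by apply: w0. rewrite add0r.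
  by apply: eq_bigl => y; rewrite !inE.
have vcut : is_cut p v [set v] by rewrite /is_cut !inE eqxx pv.
have lamv : cutval w S <= lambda w p v.
  rewrite /lambda; apply: le_bigmin; first exact: Smin.
  by move=> T' /Smin.
have Tcut : is_cut p v' T by rewrite /is_cut v'S !inE (negbTE pS) andbF.
have lamv' : lambda w p v' <= cutval w T by exact: bigmin_le_cond.
have Sd : cutval w S <= d by rewrite -cv; exact: Smin.
have h : cutval w T <= 4/5 * cutval w S.
  rewrite cT; move: Sd Hbig; rewrite cS -/a; rewrite -/d; lra.
move: lamv lamv' h; lra.
Qed.
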